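(* Let $K\subseteq L$ be real closed fields, and $C$ an additive cut in $L$. Let $C'$ and $C'_{\mathrm{mlt}}$ be the cuts induced on $K$ by $C$ and $C_{\mathrm{mlt}}$ respectively, i.e. $C'=(C^-\cap K,C^+\cap K)$ and $C'_{\mathrm{mlt}}=((C_{\mathrm{mlt}})^-\cap K,(C_{\mathrm{mlt}})^+\cap K)$. Suppose that $C'_{\mathrm{mlt}}=(C')_{\mathrm{mlt}}$, and that $x,y\in L$ are two realizations of the cut $C'$ of $K$, with $x\in C^-$ and $y\in C^+$. Then $y/x$ induces the cut $C'_{\mathrm{mlt}}$ on $K$; that is, $(C'_{\mathrm{mlt}})^-=\{a\in K: a<y/x\}$ and $(C'_{\mathrm{mlt}})^+=\{a\in K: a\ge y/x\}$.
   Context: A cut of an ordered field $F$ is a pair $C=(C^-,C^+)$ with $F=C^-\cup C^+$ disjoint and $C^-<C^+$. $F_+=\{c\in F: c>0\}$. A cut $C$ of $F$ is additive if $C^-$ is closed under addition and contains some positive element. For a cut $C$ of $F$, $C_{\mathrm{mlt}}$ is the cut of $F$ whose left side is $\{r\in F: r\cdot(C^-\cap F_+)\subseteq C^-\}$ (and whose right side is the complement). An element $a$ of an extension field realizes a cut $D$ of $K$ if $D^-=\{c\in K:c<a\}$ and $D^+=\{c\in K:c>a\}$. *)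

(* Defs.v *)
From HB Require Import structures.
From mathcomp Require Import all_boot all_order all_algebra.
From mathcomp Require Import polyrcf.
Set Implicit Arguments. Unset Strict Implicit. Unset Printing Implicit Defensive.
Import Order.TTheory GRing.Theory Num.Theory.
Local Open Scope ring_scope.

(* A cut C = (C^-, C^+) of an ordered field F is represented by its left side
   C^- : F -> Prop; the right side C^+ is the complement.  The condition
   C^- < C^+ is equivalent to C^- being downward closed. *)
Definition is_cut (F : realFieldType) (Cm : F -> Prop) : Prop :=
  forall a b : F, Cm b -> a <= b -> Cm a.

Definition cut_right (F : realFieldType) (Cm : F -> Prop) : F -> Prop :=
  fun a => ~ Cm a.

Definition additive_cut (F : realFieldType) (Cm : F -> Prop) : Prop :=
  is_cut Cm /\ (forall a b, Cm a -> Cm b -> Cm (a + b)) /\ (exists c, 0 < c /\ Cm c).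

Definition cut_mlt (F : realFieldType) (Cm : F -> Prop) : F -> Prop :=
  fun r => forall c, Cm c -> 0 < c -> Cm (r * c).

Definition induced_cut (K L : realFieldType) (f : K -> L) (Cm : L -> Prop) : K -> Prop :=
  fun a => Cm (f a).

Definition realizes (K L : realFieldType) (f : K -> L) (Dm : K -> Prop) (x : L) : Prop :=
  (forall c, Dm c <-> f c < x) /\ (forall c, cut_right Dm c <-> x < f c).

(* Main.v *)
Require Import Defs.
From HB Require Import structures.
From mathcomp Require Import all_boot all_order all_algebra.
From mathcomp Require Import polyrcf.
Import Order.TTheory GRing.Theory Num.Theory.
Local Open Scope ring_scope.

Theorem lemma2p10 (K L : rcfType) (f : {rmorphism K -> L})
  (C : L -> Prop) (x y : L) :
  additive_cut C ->
  (forall a : K, induced_cut f (cut_mlt C) a <-> cut_mlt (induced_cut f C) a) ->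
  realizes f (induced_cut f C) x -> realizes f (induced_cut f C) y ->
  C x -> cut_right C y ->
  (forall a : K, induced_cut f (cut_mlt C) a <-> f a < y / x) /\
  (forall a : K, cut_right (induced_cut f (cut_mlt C)) a <-> y / x <= f a).
Proof.
move=> [Hcut [Hadd [c0 [c0p Cc0]]]] Hm [Hx1 _] [Hy1 _] Cx Ny.
have C0 : C 0 by apply: (Hcut _ c0) => //; exact: ltW.
have x0 : 0 < x by rewrite -(rmorph0 f); apply/(Hx1 0); rewrite /induced_cut rmorph0.
have xy : x < y.
  rewrite ltNge; apply/negP => yx; apply: Ny; exact: (Hcut _ x).
have y0 : 0 < y by apply: lt_trans xy.
have fpos : forall c : K, 0 <= f c -> True by [].
have fge0 : forall c : K, 0 < c -> 0 <= f c.
  move=> c cp; rewrite -[c](sqr_sqrtr (ltW cp)) rmorphXn; exact: sqr_ge0.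
have main : forall a : K, induced_cut f (cut_mlt C) a <-> f a < y / x.
  move=> a; split.
  - move=> Ha; rewrite ltr_pdivlMr //; rewrite ltNge; apply/negP => le.
    apply: Ny; apply: (Hcut _ (f a * x)) => //; exact: Ha.
  - move=> lt; apply/Hm => c Cc cp.
    apply/(Hy1 (a * c)); rewrite rmorphM.
    have fcx : f c < x by apply/(Hx1 c).
    have fc0 := fge0 c cp.
    case: (leP 0 (f a)) => fa.
    + apply: (le_lt_trans (y := f a * x)); first by apply: ler_wpM2l => //; exact: ltW.
      by rewrite -ltr_pdivlMr.
    + apply: (le_lt_trans (y := 0)) => //.
      by rewrite mulr_le0_ge0 // ltW.
split=> // a; rewrite /cut_right; split.
- by move=> H; rewrite leNgt; apply/negP => /(main a).
- by rewrite leNgt => /negP H /(main a).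
Qed.
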